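(* Let $V$ be a complex normed vector space, $x\in l^{\infty}(V)$ and $v\in V$. Then $x$ is strongly almost convergent to $v$ if and only if $p(x-\widetilde v)=0$.
   Context: $\mathbb{N}=\{1,2,3,\dots\}$. $l^{\infty}(V)$ is the space of bounded sequences $x=\{x_n\}_{n=1}^\infty$ in $V$ with norm $\|x\|_\infty=\sup_n\|x_n\|_V$. For $v\in V$, $\widetilde v=\{v,v,\dots\}$. $T$ is the left shift: $T\{x_1,x_2,\dots\}=\{x_2,x_3,\dots\}$. A Banach limit functional is a bounded linear functional $L$ on $l^\infty(V)$ with $\|L\|\le1$ and $L(Tx)=L(x)$ for all $x$. A sequence $x\in l^\infty(V)$ is strongly almost convergent to $v\in V$ if $L(x)=L(\widetilde v)$ for every Banach limit functional $L$. For $x\in l^\infty(V)$, $p(x):=\lim_{n\to\infty}\left(\sup_{j\in\mathbb{N}}\frac1n\left\|\sum_{i=0}^{n-1}x_{i+j}\right\|_V\right)$ (this limit exists). *)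

(* Defs.v *)
From Stdlib Require Import Reals.
Open Scope R_scope.

Definition C : Type := (R * R)%type.
Definition C0 : C := (0, 0).
Definition C1 : C := (1, 0).
Definition Cplus (a b : C) : C := (fst a + fst b, snd a + snd b).
Definition Cmult (a b : C) : C :=
  (fst a * fst b - snd a * snd b, fst a * snd b + snd a * fst b).
Definition Cmod (a : C) : R := sqrt (fst a ^ 2 + snd a ^ 2).

Record CNormedSpace : Type := {
  carrier :> Type;
  vzero : carrier;
  vadd : carrier -> carrier -> carrier;
  vopp : carrier -> carrier;
  vscal : C -> carrier -> carrier;
  vnorm : carrier -> R;
  vadd_assoc : forall a b c, vadd a (vadd b c) = vadd (vadd a b) c;
  vadd_comm : forall a b, vadd a b = vadd b a;
  vadd_zero : forall a, vadd a vzero = a;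
  vadd_opp : forall a, vadd a (vopp a) = vzero;
  vscal_assoc : forall (s t : C) a, vscal s (vscal t a) = vscal (Cmult s t) a;
  vscal_one : forall a, vscal C1 a = a;
  vscal_distr_l : forall (s : C) a b, vscal s (vadd a b) = vadd (vscal s a) (vscal s b);
  vscal_distr_r : forall (s t : C) a, vscal (Cplus s t) a = vadd (vscal s a) (vscal t a);
  vnorm_nonneg : forall a, 0 <= vnorm a;
  vnorm_eq0 : forall a, vnorm a = 0 -> a = vzero;
  vnorm_scal : forall (s : C) a, vnorm (vscal s a) = Cmod s * vnorm a;
  vnorm_triangle : forall a b, vnorm (vadd a b) <= vnorm a + vnorm b
}.

Section Seq.
Variable V : CNormedSpace.

(** Sequences are indexed by nat starting at 0 (index n here = index n+1 in the paper). *)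
Definition seq_bounded (x : nat -> V) : Prop :=
  exists M : R, forall n, vnorm V (x n) <= M.

Definition const_seq (v : V) : nat -> V := fun _ => v.

Definition shift (x : nat -> V) : nat -> V := fun n => x (S n).

Definition seq_add (x y : nat -> V) : nat -> V := fun n => vadd V (x n) (y n).
Definition seq_scal (c : C) (x : nat -> V) : nat -> V := fun n => vscal V c (x n).
Definition seq_sub (x y : nat -> V) : nat -> V := fun n => vadd V (x n) (vopp V (y n)).

(** It is given as a function on all sequences but constrained only on seq_bounded ones,
    which is equivalent to a functional on l^oo(V). *)
Definition BanachLimit (L : (nat -> V) -> C) : Prop :=
  (forall x y, seq_bounded x -> seq_bounded y -> L (seq_add x y) = Cplus (L x) (L y)) /\
  (forall c x, seq_bounded x -> L (seq_scal c x) = Cmult c (L x)) /\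
  (forall x M, seq_bounded x -> (forall n, vnorm V (x n) <= M) -> Cmod (L x) <= M) /\
  (forall x, seq_bounded x -> L (shift x) = L x).

Definition strongly_almost_convergent (x : nat -> V) (v : V) : Prop :=
  forall L, BanachLimit L -> L x = L (const_seq v).

Fixpoint block_sum (x : nat -> V) (j n : nat) : V :=
  match n with
  | O => vzero V
  | S m => vadd V (block_sum x j m) (x (m + j)%nat)
  end.

(** a n = sup_j (1/(n+1)) || sum_{i=0}^{n} x_{i+j} ||  (paper's n shifted by one) *)
Definition avg_sup (x : nat -> V) (n : nat) (s : R) : Prop :=
  is_lub (fun r => exists j : nat,
            r = / INR (S n) * vnorm V (block_sum x j (S n))) s.

Definition p_is (x : nat -> V) (l : R) : Prop :=
  exists a : nat -> R, (forall n, avg_sup x n (a n)) /\ Un_cv a l.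

End Seq.

(* Main.v *)
Require Import Defs.
From Stdlib Require Import Reals Lra Lia Classical ClassicalEpsilon FunctionalExtensionality PropExtensionality.
Import Defs.
Open Scope R_scope.

Section Zorn.
Variables (T : Type) (R : T -> T -> Prop) (P : T -> Prop).
Hypothesis Rrefl : forall x, R x x.
Hypothesis Rtrans : forall x y z, R x y -> R y z -> R x z.
Definition is_chainZ (C : T -> Prop) :=
  (forall x, C x -> P x) /\ (forall x y, C x -> C y -> R x y \/ R y x).
Hypothesis ubZ : forall C, is_chainZ C -> exists u, P u /\ forall x, C x -> R x u.

Let Sub (A B : T -> Prop) := forall x, A x -> B x.

Lemma sub_ext (A B : T -> Prop) : Sub A B -> Sub B A -> A = B.
Proof.
  intros H1 H2. apply functional_extensionality; intro x.
  apply propositional_extensionality; split; auto.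
Qed.

Theorem zorn : exists m, P m /\ forall y, P y -> R m y -> R y m.
Proof.
  apply NNPP; intro Hn.
  assert (H : forall m, P m -> exists y, P y /\ R m y /\ ~ R y m).
  { intros m Pm. apply NNPP; intro H1. apply Hn. exists m; split; auto.
    intros y Py Rmy. apply NNPP; intro H2. apply H1. eauto. }
  assert (HF : forall C : T -> Prop, exists t, is_chainZ C -> P t /\ forall x, C x -> R x t /\ ~ R t x).
  { intro C. destruct (classic (is_chainZ C)) as [HC|HC].
    - destruct (ubZ C HC) as [u [Pu Hu]]. destruct (H u Pu) as [y [Py [Ruy Nyu]]].
      exists y. intros _. split; auto. intros x Cx. split; eauto.
    - assert (HE : is_chainZ (fun _ => False)) by (split; intros; contradiction).
      destruct (ubZ _ HE) as [u _]. exists u; intro; contradiction. }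
  pose (F := fun C => proj1_sig (constructive_indefinite_description _ (HF C))).
  assert (FS : forall C, is_chainZ C -> P (F C) /\ forall x, C x -> R x (F C) /\ ~ R (F C) x).
  { intro C. exact (proj2_sig (constructive_indefinite_description _ (HF C))). }
  clearbody F.
  pose (g := fun (C : T -> Prop) x => C x \/ x = F C).
  pose (Union := fun (CC : (T -> Prop) -> Prop) x => exists C, CC C /\ C x).
  pose (chainF := fun (CC : (T -> Prop) -> Prop) => forall A B, CC A -> CC B -> Sub A B \/ Sub B A).
  pose (tower := fun (TT : (T -> Prop) -> Prop) =>
     (forall S, TT S -> TT (g S)) /\ (forall CC, (forall S, CC S -> TT S) -> chainF CC -> TT (Union CC))).
  pose (M := fun S => forall TT, tower TT -> TT S).
  assert (Mt : tower M).
  { split.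
    - intros S MS TT HT. apply (proj1 HT). apply MS; auto.
    - intros CC HC Hch TT HT. apply (proj2 HT); auto. intros S CS. apply HC; auto. }
  assert (Mind : forall Q : (T -> Prop) -> Prop, tower (fun S => M S /\ Q S) -> forall S, M S -> Q S).
  { intros Q HT S MS. apply (MS _ HT). }
  assert (gsub : forall S, Sub S (g S)) by (intros S x Sx; left; exact Sx).
  pose (extreme := fun A => forall B, M B -> Sub B A -> B <> A -> Sub (g B) A).
  assert (L1 : forall A, M A -> extreme A -> forall B, M B -> Sub B A \/ Sub (g A) B).
  { intros A MA EA. apply Mind. split.
    - intros S [MS QS]. split; [apply (proj1 Mt); auto|].
      destruct QS as [QS|QS].
      + destruct (classic (S = A)) as [E|E].
        * subst S. right. intros x h; exact h.
        * left. apply EA; auto.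
      + right. intros x h. apply gsub. apply QS. exact h.
    - intros CC HC Hch. split.
      + apply (proj2 Mt); auto. intros S CS; apply (HC S CS).
      + destruct (classic (exists C, CC C /\ Sub (g A) C)) as [[C [CC1 HC1]]|NE].
        * right. intros x h. exists C; split; auto.
        * left. intros x [C [CC1 Cx]]. destruct (proj2 (HC C CC1)) as [h|h]; [exact (h x Cx)|].
          exfalso. apply NE. exists C; auto. }
  assert (L2 : forall A, M A -> extreme A).
  { apply Mind. split.
    - intros A [MA EA]. split; [apply (proj1 Mt); auto|].
      intros B MB SB NB. destruct (L1 A MA EA B MB) as [h|h].
      + destruct (classic (B = A)) as [E|E].
        * subst B. intros x hx; exact hx.
        * intros x hx. apply gsub. exact (EA B MB h E x hx).
      + exfalso. apply NB. apply sub_ext; auto.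
    - intros CC HC Hch. split.
      + apply (proj2 Mt); auto. intros S CS; apply (HC S CS).
      + intros B MB SB NB.
        assert (Ex : exists x, Union CC x /\ ~ B x).
        { apply NNPP; intro Hx. apply NB. apply sub_ext; auto.
          intros x hx. apply NNPP; intro nb. apply Hx. exists x; auto. }
        destruct Ex as [x [[C' [CC' C'x]] nBx]].
        destruct (HC C' CC') as [MC' EC'].
        destruct (L1 C' MC' EC' B MB) as [h|h].
        * assert (BC : B <> C') by (intro E; subst; contradiction).
          intros y hy. exists C'. split; auto. exact (EC' B MB h BC y hy).
        * exfalso. apply nBx. apply h. apply gsub. exact C'x. }
  assert (Mch : chainF M).
  { intros A B MA MB. destruct (L1 A MA (L2 A MA) B MB) as [h|h]; [right; exact h|].
    left. intros x hx. apply h. apply gsub; exact hx. }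
  assert (Mc : forall S, M S -> is_chainZ S).
  { apply Mind. split.
    - intros S [MS [HP HR]]. split; [apply (proj1 Mt); auto|].
      destruct (FS S (conj HP HR)) as [PF RF]. split.
      + intros x [h|h]; [auto| subst; auto].
      + intros x y [hx|hx] [hy|hy].
        * auto.
        * subst y. left. apply RF; auto.
        * subst x. right. apply RF; auto.
        * subst. left; auto.
    - intros CC HC Hch. split.
      + apply (proj2 Mt); auto. intros S CS; apply (HC S CS).
      + split.
        * intros x [C [CC1 Cx]]. exact (proj1 (proj2 (HC C CC1)) x Cx).
        * intros x y [A [CA Ax]] [B [CB By]].
          destruct (Hch A B CA CB) as [h|h].
          -- exact (proj2 (proj2 (HC B CB)) x y (h x Ax) By).
          -- exact (proj2 (proj2 (HC A CA)) x y Ax (h y By)). }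
  set (U := Union M).
  assert (MU : M U) by (apply (proj2 Mt); auto).
  assert (MgU : M (g U)) by (apply (proj1 Mt); auto).
  assert (FU : U (F U)) by (exists (g U); split; auto; right; reflexivity).
  destruct (FS U (Mc U MU)) as [_ RF]. destruct (RF _ FU) as [_ h]. apply h, Rrefl.
Qed.
End Zorn.

Definition lubR (E : R -> Prop) : R :=
  match excluded_middle_informative (bound E /\ exists x, E x) with
  | left h => proj1_sig (completeness E (proj1 h) (proj2 h))
  | right _ => 0
  end.

Lemma lubR_spec E : bound E -> (exists x, E x) -> is_lub E (lubR E).
Proof.
  intros hb he. unfold lubR.
  destruct (excluded_middle_informative _) as [h|h].
  - exact (proj2_sig (completeness E (proj1 h) (proj2 h))).
  - exfalso; tauto.
Qed.

Definition glbR (E : R -> Prop) : R := - lubR (fun r => E (- r)).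

Lemma glbR_lb E x : (exists m, forall y, E y -> m <= y) -> E x -> glbR E <= x.
Proof.
  intros [m hm] hx. unfold glbR.
  assert (H : is_lub (fun r => E (- r)) (lubR (fun r => E (- r)))).
  { apply lubR_spec.
    - exists (- m). intros r hr. specialize (hm _ hr). lra.
    - exists (- x). rewrite Ropp_involutive. exact hx. }
  destruct H as [H1 _]. assert (h := H1 (- x)). cbv beta in h. rewrite Ropp_involutive in h. specialize (h hx). lra.
Qed.

Lemma glbR_ge E c : (exists x, E x) -> (forall y, E y -> c <= y) -> c <= glbR E.
Proof.
  intros [x hx] hc. unfold glbR.
  assert (H : is_lub (fun r => E (- r)) (lubR (fun r => E (- r)))).
  { apply lubR_spec.
    - exists (- c). intros r hr. specialize (hc _ hr). lra.
    - exists (- x). rewrite Ropp_involutive. exact hx. }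
  destruct H as [_ H2]. assert (h : lubR (fun r => E (- r)) <= - c).
  { apply H2. intros r hr. specialize (hc _ hr). lra. }
  lra.
Qed.

Lemma glbR_add2 (A B : R -> Prop) c :
  (exists x, A x) -> (exists x, B x) ->
  (exists m, forall y, A y -> m <= y) -> (exists m, forall y, B y -> m <= y) ->
  (forall a b, A a -> B b -> c <= a + b) -> c <= glbR A + glbR B.
Proof.
  intros hA hB lA lB H.
  assert (H1 : forall b, B b -> c - b <= glbR A).
  { intros b hb. apply glbR_ge; auto. intros a ha. specialize (H a b ha hb). lra. }
  assert (H2 : c - glbR A <= glbR B).
  { apply glbR_ge; auto. intros b hb. specialize (H1 b hb). lra. }
  lra.
Qed.

Section HB.
Variables (X : Type) (add : X -> X -> X) (sc : R -> X -> X) (z : X) (W : X -> Prop).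
Hypothesis W_add : forall x y, W x -> W y -> W (add x y).
Hypothesis W_sc : forall r x, W x -> W (sc r x).
Hypothesis add_assoc : forall x y w, add x (add y w) = add (add x y) w.
Hypothesis add_comm : forall x y, add x y = add y x.
Hypothesis add_z : forall x, add x z = x.
Hypothesis sc_0 : forall x, sc 0 x = z.
Hypothesis sc_1 : forall x, sc 1 x = x.
Hypothesis sc_distr : forall r x y, sc r (add x y) = add (sc r x) (sc r y).
Hypothesis sc_plus : forall r t x, sc (r + t) x = add (sc r x) (sc t x).
Hypothesis sc_assoc : forall r t x, sc r (sc t x) = sc (r * t) x.

Definition sublin (s : X -> R) :=
  (forall x y, W x -> W y -> s (add x y) <= s x + s y) /\
  (forall r x, W x -> 0 <= r -> s (sc r x) = r * s x).

Lemma add_neg x : add x (sc (-1) x) = z.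
Proof.
  rewrite <- (sc_1 x) at 1. rewrite <- sc_plus. replace (1 + -1) with 0 by ring. apply sc_0.
Qed.

Lemma sub_z (s : X -> R) : sublin s -> forall x, W x -> s z = 0.
Proof.
  intros [_ h] x hx. rewrite <- (sc_0 x). rewrite h; auto; lra.
Qed.

Lemma sublin_neg (s : X -> R) : sublin s -> forall x, W x -> 0 <= s x + s (sc (-1) x).
Proof.
  intros hs x hx. rewrite <- (sub_z s hs x hx). rewrite <- (add_neg x).
  apply (proj1 hs); auto.
Qed.

Lemma add_swap p q r u : add (add p q) (add r u) = add (add p r) (add q u).
Proof.
  rewrite <- add_assoc. rewrite (add_assoc q r u). rewrite (add_comm q r).
  rewrite <- (add_assoc r q u). apply add_assoc.
Qed.

Definition sa (s : X -> R) (a : X) (x : X) : R :=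
  glbR (fun r => exists t, 0 <= t /\ r = s (add x (sc t a)) - t * s a).

Lemma sa_lowb s a x : sublin s -> W a -> W x ->
  exists m, forall y, (fun r => exists t, 0 <= t /\ r = s (add x (sc t a)) - t * s a) y -> m <= y.
Proof.
  intros hs ha hx. exists (- s (sc (-1) x)). intros y [t [ht ->]].
  assert (E : sc t a = add (add x (sc t a)) (sc (-1) x)).
  { rewrite (add_comm x (sc t a)). rewrite <- add_assoc. rewrite add_neg. now rewrite add_z. }
  assert (h := proj1 hs (add x (sc t a)) (sc (-1) x) (W_add _ _ hx (W_sc _ _ ha)) (W_sc _ _ hx)).
  rewrite <- E in h. rewrite (proj2 hs) in h; auto. lra.
Qed.

Lemma sa_le s a x : sublin s -> W a -> W x -> sa s a x <= s x.
Proof.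
  intros hs ha hx. unfold sa. apply glbR_lb. apply sa_lowb; auto.
  exists 0. split; [lra|]. rewrite sc_0, add_z. ring.
Qed.

Lemma sa_neg s a : sublin s -> W a -> sa s a (sc (-1) a) <= - s a.
Proof.
  intros hs ha. unfold sa. apply glbR_lb. apply sa_lowb; auto.
  exists 1. split; [lra|]. rewrite sc_1. rewrite add_comm, add_neg.
  rewrite (sub_z s hs a ha). ring.
Qed.

Lemma sa_sublin s a : sublin s -> W a -> sublin (sa s a).
Proof.
  intros hs ha. split.
  - intros x y hx hy. unfold sa at 2 3. apply glbR_add2.
    + exists (s (add x (sc 0 a)) - 0 * s a). exists 0; split; auto; lra.
    + exists (s (add y (sc 0 a)) - 0 * s a). exists 0; split; auto; lra.
    + apply sa_lowb; auto.
    + apply sa_lowb; auto.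
    + intros u v [t [ht ->]] [w [hw ->]].
      assert (E : add (add x y) (sc (t + w) a) = add (add x (sc t a)) (add y (sc w a))).
      { rewrite sc_plus. apply add_swap. }
      eapply Rle_trans.
      * unfold sa. apply glbR_lb. apply sa_lowb; auto. exists (t + w). split; [lra|reflexivity].
      * rewrite E. assert (h := proj1 hs _ _ (W_add _ _ hx (W_sc t _ ha)) (W_add _ _ hy (W_sc w _ ha))). lra.
  - intros r x hx hr. destruct (Req_dec r 0) as [E0|E0].
    + subst r. rewrite sc_0. rewrite Rmult_0_l. apply Rle_antisym.
      * unfold sa. apply glbR_lb. apply sa_lowb; auto. rewrite <- (sc_0 x). auto.
        exists 0. split; [lra|]. rewrite !sc_0, add_z. rewrite (sub_z s hs x hx). ring.
      * unfold sa. apply glbR_ge.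
        { exists (s (add z (sc 0 a)) - 0 * s a). exists 0; split; auto; lra. }
        intros e [t [ht ->]]. rewrite add_comm, add_z. rewrite (proj2 hs); auto. lra.
    + assert (rp : 0 < r) by lra.
      assert (Wr : W (sc r x)) by auto.
      apply Rle_antisym.
      * assert (H : sa s a (sc r x) / r <= sa s a x).
        { unfold sa at 2. apply glbR_ge.
          { exists (s (add x (sc 0 a)) - 0 * s a). exists 0; split; auto; lra. }
          intros e [t [ht ->]].
          assert (h : sa s a (sc r x) <= s (add (sc r x) (sc (r * t) a)) - (r * t) * s a).
          { unfold sa. apply glbR_lb. apply sa_lowb; auto. exists (r * t). split; [nra|reflexivity]. }
          rewrite <- sc_assoc, <- sc_distr in h. rewrite (proj2 hs) in h; auto.
          apply (Rmult_le_reg_l r); auto. field_simplify; [|lra]. lra. }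
        apply (Rmult_le_compat_l r) in H; [|lra]. field_simplify in H; lra.
      * unfold sa at 2. apply glbR_ge.
        { exists (s (add (sc r x) (sc 0 a)) - 0 * s a). exists 0; split; auto; lra. }
        intros e [t [ht ->]].
        assert (h : sa s a x <= s (add x (sc (t / r) a)) - (t / r) * s a).
        { unfold sa. apply glbR_lb. apply sa_lowb; auto. exists (t / r). split; [|reflexivity].
          unfold Rdiv; apply Rmult_le_pos; [lra|]; left; apply Rinv_0_lt_compat; lra. }
        replace (sc t a) with (sc r (sc (t / r) a)) by (rewrite sc_assoc; f_equal; field; lra).
        rewrite <- sc_distr. rewrite (proj2 hs); auto.
        apply (Rmult_le_compat_l r) in h; [|lra].
        replace (r * (s (add x (sc (t / r) a)) - t / r * s a)) with (r * s (add x (sc (t / r) a)) - t * s a) in h by (field; lra).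
        lra.
Qed.

Variable q : X -> R.
Hypothesis q_add : forall x y, W x -> W y -> q (add x y) <= q x + q y.
Hypothesis q_hom : forall r x, W x -> 0 <= r -> q (sc r x) <= r * q x.

Lemma q_sublin : sublin q.
Proof.
  split; auto. intros r x hx hr. destruct (Req_dec r 0) as [E0|E0].
  - subst r. rewrite Rmult_0_l. apply Rle_antisym.
    + assert (h := q_hom 0 x hx (Rle_refl 0)). lra.
    + rewrite sc_0. assert (Wz : W z) by (rewrite <- (sc_0 x); auto).
      assert (h := q_add z z Wz Wz). rewrite add_z in h. lra.
  - apply Rle_antisym; auto.
    assert (h := q_hom (/ r) (sc r x) (W_sc _ _ hx)).
    rewrite sc_assoc in h. replace (/ r * r) with 1 in h by (field; auto). rewrite sc_1 in h.
    assert (h2 : q x <= / r * q (sc r x)) by (apply h; left; apply Rinv_0_lt_compat; lra).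
    apply (Rmult_le_compat_l r) in h2; [|lra].
    replace (r * (/ r * q (sc r x))) with (q (sc r x)) in h2 by (field; auto). lra.
Qed.

Theorem HB_main y0 : W y0 -> exists f : (X -> R),
  (forall x y, W x -> W y -> f (add x y) = f x + f y) /\
  (forall r x, W x -> f (sc r x) = r * f x) /\
  (forall x, W x -> f x <= q x) /\ f y0 = q y0.
Proof.
  intro hy0.
  pose (Rz := fun (s1 s2 : X -> R) => forall x, W x -> s2 x <= s1 x).
  pose (Pz := fun s => sublin s /\ (forall x, W x -> s x <= q x) /\ s (sc (-1) y0) <= - q y0).
  assert (HP0 : Pz (sa q y0)).
  { split; [apply sa_sublin; auto; apply q_sublin|]. split.
    - intros x hx. apply sa_le; auto. apply q_sublin.
    - apply sa_neg; auto. apply q_sublin. }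
  destruct (zorn (X -> R) Rz Pz) as [m [[ms [mq my]] mmin]].
  - intros s x hx; lra.
  - intros s1 s2 s3 h1 h2 x hx. specialize (h1 x hx); specialize (h2 x hx); lra.
  - intros C [CP Cch]. destruct (classic (exists s, C s)) as [[s0 Cs0]|NC].
    2:{ exists (sa q y0). split; auto. intros s Cs; exfalso; eauto. }
    pose (u := fun x => glbR (fun r => exists s, C s /\ r = s x)).
    assert (lowb : forall x, W x -> exists m, forall y, (fun r => exists s, C s /\ r = s x) y -> m <= y).
    { intros x hx. exists (- q (sc (-1) x)). intros y [s [Cs ->]].
      destruct (CP s Cs) as [ss [sq _]]. assert (h1 := sublin_neg s ss x hx).
      assert (h2 := sq _ (W_sc (-1) _ hx)). lra. }
    assert (ne : forall x, exists r, (fun r => exists s, C s /\ r = s x) r).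
    { intro x. exists (s0 x). exists s0; auto. }
    assert (ule : forall s x, C s -> W x -> u x <= s x).
    { intros s x Cs hx. unfold u. apply glbR_lb; auto. exists s; auto. }
    exists u. split.
    + split; [split|split].
      * intros x y hx hy. unfold u at 2 3. apply glbR_add2; auto.
        intros a b [s1 [C1 ->]] [s2 [C2 ->]].
        destruct (CP s1 C1) as [[s1a _] _]. destruct (CP s2 C2) as [[s2a _] _].
        destruct (Cch s1 s2 C1 C2) as [h|h].
        -- eapply Rle_trans; [apply (ule s2); auto|].
           specialize (s2a x y hx hy). specialize (h x hx). lra.
        -- eapply Rle_trans; [apply (ule s1); auto|].
           specialize (s1a x y hx hy). specialize (h y hy). lra.
      * intros r x hx hr. destruct (Req_dec r 0) as [E0|E0].
        -- subst r. rewrite Rmult_0_l. apply Rle_antisym.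
           ++ unfold u. apply glbR_lb; auto. exists s0. split; auto.
              destruct (CP s0 Cs0) as [[_ h] _]. rewrite h; auto; lra.
           ++ unfold u. apply glbR_ge; auto. intros e [s [Cs ->]].
              destruct (CP s Cs) as [[_ h] _]. rewrite h; auto; lra.
        -- assert (rp : 0 < r) by lra. apply Rle_antisym.
           ++ assert (H : u (sc r x) / r <= u x).
              { unfold u at 2. apply glbR_ge; auto. intros e [s [Cs ->]].
                assert (h := ule s (sc r x) Cs (W_sc _ _ hx)).
                destruct (CP s Cs) as [[_ hh] _]. rewrite hh in h; auto.
                apply (Rmult_le_reg_l r); auto. field_simplify; [|lra]. lra. }
              apply (Rmult_le_compat_l r) in H; [|lra]. field_simplify in H; lra.
           ++ unfold u at 2. apply glbR_ge; auto. intros e [s [Cs ->]].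
              destruct (CP s Cs) as [[_ hh] _]. rewrite hh; auto.
              apply Rmult_le_compat_l; [lra|]. apply ule; auto.
      * intros x hx. eapply Rle_trans; [apply (ule s0); auto|]. apply (CP s0 Cs0); auto.
      * eapply Rle_trans; [apply (ule s0); auto|]. apply (CP s0 Cs0).
    + intros s Cs x hx. apply ule; auto.
  -
    assert (mneg : forall a, W a -> m (sc (-1) a) = - m a).
    { intros a ha.
      assert (Pa : Pz (sa m a)).
      { split; [apply sa_sublin; auto|]. split.
        - intros x hx. eapply Rle_trans; [apply sa_le; auto|]. auto.
        - eapply Rle_trans; [apply sa_le; auto|]. auto. }
      assert (h := mmin _ Pa (fun x hx => sa_le m a x ms ha hx)).
      assert (h1 := h _ (W_sc (-1) _ ha)).
      assert (h2 := sa_neg m a ms ha).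
      assert (h3 := sublin_neg m ms a ha). lra. }
    exists m. split; [|split; [|split]].
    + intros x y hx hy. apply Rle_antisym; [apply (proj1 ms); auto|].
      assert (h := proj1 ms _ _ (W_sc (-1) _ hx) (W_sc (-1) _ hy)).
      rewrite <- sc_distr in h. rewrite !mneg in h; auto. lra.
    + intros r x hx. destruct (Rle_lt_dec 0 r) as [hr|hr].
      * apply (proj2 ms); auto.
      * replace (sc r x) with (sc (-1) (sc (- r) x)) by (rewrite sc_assoc; f_equal; ring).
        rewrite mneg; auto. rewrite (proj2 ms); auto; lra.
    + exact mq.
    + apply Rle_antisym; auto. rewrite mneg in my; auto. lra.
Qed.
End HB.

Lemma C_eq (a b : C) : fst a = fst b -> snd a = snd b -> a = b.
Proof. destruct a, b; simpl; intros -> ->; reflexivity. Qed.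

Lemma arch_le c d K : 0 <= K -> (forall N, c <= d + K / INR (S N)) -> c <= d.
Proof.
  intros hK H. apply Rnot_lt_le; intro hlt.
  destruct (INR_unbounded (K / (c - d))) as [N hN].
  specialize (H N). rewrite S_INR in H.
  assert (hp : 0 < INR N + 1) by (pose proof (pos_INR N); lra).
  assert (h1 : K / (c - d) < INR N + 1) by lra.
  assert (h2 : K < (c - d) * (INR N + 1)).
  { apply (Rmult_lt_compat_l (c - d)) in h1; [|lra]. field_simplify in h1; lra. }
  assert (h3 : K / (INR N + 1) < c - d).
  { apply (Rmult_lt_reg_r (INR N + 1)); auto. field_simplify; lra. }
  lra.
Qed.

Section VL.
Variable V : CNormedSpace.

Lemma vadd_zero_l (a : V) : vadd V (vzero V) a = a.
Proof. rewrite vadd_comm; apply vadd_zero. Qed.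

Lemma vadd_cancel (a b c : V) : vadd V a b = vadd V a c -> b = c.
Proof.
  intro h. rewrite <- (vadd_zero_l b), <- (vadd_zero_l c).
  rewrite <- (vadd_opp V a). rewrite (vadd_comm V a).
  rewrite <- !vadd_assoc. now rewrite h.
Qed.

Lemma vscal0 (a : V) : vscal V C0 a = vzero V.
Proof.
  apply (vadd_cancel (vscal V C0 a)). rewrite vadd_zero.
  rewrite <- vscal_distr_r. f_equal. apply C_eq; simpl; ring.
Qed.

Lemma vscal_zero (c : C) : vscal V c (vzero V) = vzero V.
Proof.
  apply (vadd_cancel (vscal V c (vzero V))). rewrite vadd_zero.
  rewrite <- vscal_distr_l. now rewrite vadd_zero.
Qed.

Lemma vopp_unique (a b : V) : vadd V b a = vzero V -> b = vopp V a.
Proof.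
  intro h. rewrite <- (vadd_zero V b). rewrite <- (vadd_opp V a). rewrite vadd_assoc, h.
  apply vadd_zero_l.
Qed.

Definition m1 : C := (-1, 0).

Lemma vopp_scal (a : V) : vopp V a = vscal V m1 a.
Proof.
  symmetry. apply vopp_unique. rewrite <- (vscal_one V a) at 2.
  rewrite <- vscal_distr_r. rewrite <- (vscal0 a). f_equal. apply C_eq; simpl; ring.
Qed.

Lemma vnorm_zero : vnorm V (vzero V) = 0.
Proof.
  rewrite <- (vscal0 (vzero V)). rewrite vnorm_scal.
  replace (Cmod C0) with 0; [ring|]. unfold Cmod, C0. cbn [fst snd].
  replace (0 ^ 2 + 0 ^ 2) with 0 by ring. rewrite sqrt_0. ring.
Qed.

Lemma Cmod_real r : Cmod (r, 0) = Rabs r.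
Proof.
  unfold Cmod; simpl. rewrite <- sqrt_Rsqr_abs. f_equal. unfold Rsqr. ring.
Qed.

Lemma vadd_swap (p q r u : V) : vadd V (vadd V p q) (vadd V r u) = vadd V (vadd V p r) (vadd V q u).
Proof.
  rewrite <- vadd_assoc. rewrite (vadd_assoc V q r u). rewrite (vadd_comm V q r).
  rewrite <- (vadd_assoc V r q u). apply vadd_assoc.
Qed.

End VL.

Section SQ.
Variable V : CNormedSpace.
Notation bs := (block_sum V).

Definition bnd (x : nat -> V) M := forall n, vnorm V (x n) <= M.

Lemma bnd_nonneg x M : bnd x M -> 0 <= M.
Proof. intro h. eapply Rle_trans; [apply vnorm_nonneg|apply (h 0%nat)]. Qed.

Lemma bs_norm x M j n : bnd x M -> vnorm V (bs x j n) <= INR n * M.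
Proof.
  intro h. induction n as [|n IH]; simpl block_sum.
  - rewrite vnorm_zero. simpl; lra.
  - eapply Rle_trans; [apply vnorm_triangle|]. rewrite S_INR. specialize (h (n + j)%nat). lra.
Qed.

Lemma bs_add x y j n : bs (seq_add V x y) j n = vadd V (bs x j n) (bs y j n).
Proof.
  induction n as [|n IH]; simpl.
  - now rewrite vadd_zero.
  - rewrite IH. unfold seq_add. apply vadd_swap.
Qed.

Lemma bs_scal c x j n : bs (seq_scal V c x) j n = vscal V c (bs x j n).
Proof.
  induction n as [|n IH]; simpl.
  - now rewrite vscal_zero.
  - rewrite IH, vscal_distr_l. reflexivity.
Qed.

Lemma bs_split x j p r : bs x j (p + r) = vadd V (bs x j p) (bs x (j + p) r).
Proof.
  induction r as [|r IH].
  - rewrite Nat.add_0_r. simpl. now rewrite vadd_zero.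
  - rewrite Nat.add_succ_r. simpl. rewrite IH. rewrite <- vadd_assoc. do 3 f_equal. lia.
Qed.

Definition Eset (x : nat -> V) n := fun r => exists j, r = / INR (S n) * vnorm V (bs x j (S n)).
Definition aval x n := lubR (Eset x n).

Lemma INRS_pos n : 0 < INR (S n).
Proof. apply lt_0_INR; lia. Qed.

Lemma elem_le x M n j : bnd x M -> / INR (S n) * vnorm V (bs x j (S n)) <= M.
Proof.
  intro h. assert (h1 := bs_norm x M j (S n) h). assert (hp := INRS_pos n).
  apply (Rmult_le_reg_l (INR (S n))); auto. field_simplify; [|lra]. lra.
Qed.

Lemma aval_spec x M n : bnd x M -> is_lub (Eset x n) (aval x n).
Proof.
  intro h. apply lubR_spec.
  - exists M. intros r [j ->]. apply (elem_le x M n j h).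
  - exists (/ INR (S n) * vnorm V (bs x 0%nat (S n))). exists 0%nat; auto.
Qed.

Lemma aval_ge x M n j : bnd x M -> / INR (S n) * vnorm V (bs x j (S n)) <= aval x n.
Proof. intro h. apply (proj1 (aval_spec x M n h)). exists j; auto. Qed.

Lemma aval_ge' x M n j : bnd x M -> vnorm V (bs x j (S n)) <= INR (S n) * aval x n.
Proof.
  intro h. assert (h1 := aval_ge x M n j h). assert (hp := INRS_pos n).
  apply (Rmult_le_compat_l (INR (S n))) in h1; [|lra]. field_simplify in h1; lra.
Qed.

Lemma aval_nonneg x M n : bnd x M -> 0 <= aval x n.
Proof.
  intro h. eapply Rle_trans; [|apply (aval_ge x M n 0%nat h)].
  apply Rmult_le_pos; [left; apply Rinv_0_lt_compat, INRS_pos|apply vnorm_nonneg].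
Qed.

Lemma aval_le x M n : bnd x M -> aval x n <= M.
Proof. intro h. apply (proj2 (aval_spec x M n h)). intros r [j ->]. apply elem_le; auto. Qed.

Lemma key x M m : bnd x M -> forall n j, vnorm V (bs x j n) <= INR n * aval x m + INR (S m) * M.
Proof.
  intros h n. induction n as [n IH] using (well_founded_induction Wf_nat.lt_wf). intro j.
  assert (hM := bnd_nonneg x M h). assert (ha := aval_nonneg x M m h).
  destruct (Nat.lt_ge_cases n (S m)) as [hl|hl].
  - eapply Rle_trans; [apply (bs_norm x M j n h)|].
    assert (INR n <= INR (S m)) by (apply le_INR; lia).
    assert (0 <= INR n) by apply pos_INR. nra.
  - replace n with (S m + (n - S m))%nat by lia. rewrite bs_split.
    eapply Rle_trans; [apply vnorm_triangle|].
    assert (h1 := aval_ge' x M m j h).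
    assert (h2 := IH (n - S m)%nat ltac:(lia) (j + S m)%nat).
    rewrite plus_INR. lra.
Qed.

Lemma aval_fek x M m N : bnd x M -> aval x N <= aval x m + INR (S m) * M / INR (S N).
Proof.
  intro h. apply (proj2 (aval_spec x M N h)). intros r [j ->].
  assert (h1 := key x M m h (S N) j). assert (hp := INRS_pos N).
  set (A := aval x m) in *. set (K := INR (S m) * M) in *. set (b := vnorm V _) in *.
  set (s := INR (S N)) in *.
  replace (A + K / s) with (/ s * (s * A + K)) by (field; lra).
  apply Rmult_le_compat_l; [left; apply Rinv_0_lt_compat; auto|lra].
Qed.
End SQ.

Section SQ3.
Variable V : CNormedSpace.
Notation bs := (block_sum V).

Definition qf (x : nat -> V) := glbR (fun r => exists n, r = aval V x n).

Lemma qf_low x M : bnd V x M -> exists m, forall y, (fun r => exists n, r = aval V x n) y -> m <= y.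
Proof. intro h. exists 0. intros y [n ->]. apply (aval_nonneg V x M n h). Qed.

Lemma qf_le x M n : bnd V x M -> qf x <= aval V x n.
Proof. intro h. apply glbR_lb; [apply (qf_low x M h)|exists n; auto]. Qed.

Lemma qf_nonneg x M : bnd V x M -> 0 <= qf x.
Proof.
  intro h. apply glbR_ge; [exists (aval V x 0); exists 0%nat; auto|].
  intros y [n ->]. apply (aval_nonneg V x M n h).
Qed.

Lemma bnd_add x y Mx My : bnd V x Mx -> bnd V y My -> bnd V (seq_add V x y) (Mx + My).
Proof. intros h1 h2 n. unfold seq_add. eapply Rle_trans; [apply vnorm_triangle|]. specialize (h1 n); specialize (h2 n); lra. Qed.

Lemma bnd_scal c x M : bnd V x M -> bnd V (seq_scal V c x) (Cmod c * M).
Proof. intros h n. unfold seq_scal. rewrite vnorm_scal. apply Rmult_le_compat_l; [apply sqrt_pos|auto]. Qed.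

Lemma aval_add x y Mx My n : bnd V x Mx -> bnd V y My ->
  aval V (seq_add V x y) n <= aval V x n + aval V y n.
Proof.
  intros h1 h2. apply (proj2 (aval_spec V _ _ n (bnd_add x y Mx My h1 h2))).
  intros r [j ->]. rewrite bs_add.
  assert (a1 := aval_ge V x Mx n j h1). assert (a2 := aval_ge V y My n j h2).
  assert (t := vnorm_triangle V (bs x j (S n)) (bs y j (S n))).
  assert (hp := Rinv_0_lt_compat _ (INRS_pos n)).
  apply (Rmult_le_compat_l (/ INR (S n))) in t; lra.
Qed.

Lemma aval_scal c x M n : bnd V x M -> aval V (seq_scal V c x) n <= Cmod c * aval V x n.
Proof.
  intros h. apply (proj2 (aval_spec V _ _ n (bnd_scal c x M h))).
  intros r [j ->]. rewrite bs_scal, vnorm_scal.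
  assert (a1 := aval_ge V x M n j h). assert (hc := sqrt_pos (fst c ^ 2 + snd c ^ 2)).
  fold (Cmod c) in hc.
  apply (Rmult_le_compat_l (Cmod c)) in a1; auto. lra.
Qed.

Lemma qf_add x y Mx My : bnd V x Mx -> bnd V y My -> qf (seq_add V x y) <= qf x + qf y.
Proof.
  intros h1 h2. assert (hx := bnd_nonneg V x Mx h1). assert (hy := bnd_nonneg V y My h2).
  apply glbR_add2.
  - exists (aval V x 0); exists 0%nat; auto.
  - exists (aval V y 0); exists 0%nat; auto.
  - apply (qf_low x Mx h1).
  - apply (qf_low y My h2).
  - intros a b [n ->] [m ->].
    apply (arch_le _ _ (INR (S n) * Mx + INR (S m) * My)).
    { assert (0 <= INR (S n)) by apply pos_INR. assert (0 <= INR (S m)) by apply pos_INR. nra. }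
    intro N.
    assert (e1 := qf_le (seq_add V x y) _ N (bnd_add x y Mx My h1 h2)).
    assert (e2 := aval_add x y Mx My N h1 h2).
    assert (e3 := aval_fek V x Mx n N h1). assert (e4 := aval_fek V y My m N h2).
    assert (E : (INR (S n) * Mx + INR (S m) * My) / INR (S N) = INR (S n) * Mx / INR (S N) + INR (S m) * My / INR (S N)).
    { field. apply Rgt_not_eq, INRS_pos. }
    rewrite E. lra.
Qed.

Lemma qf_scal c x M : bnd V x M -> qf (seq_scal V c x) <= Cmod c * qf x.
Proof.
  intro h. assert (hc := sqrt_pos (fst c ^ 2 + snd c ^ 2)). fold (Cmod c) in hc.
  destruct (Req_dec (Cmod c) 0) as [E|E].
  - rewrite E, Rmult_0_l. eapply Rle_trans; [apply (qf_le _ _ 0%nat (bnd_scal c x M h))|].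
    eapply Rle_trans; [apply (aval_scal c x M 0 h)|]. rewrite E; lra.
  - assert (H : qf (seq_scal V c x) / Cmod c <= qf x).
    { apply glbR_ge; [exists (aval V x 0); exists 0%nat; auto|].
      intros y [n ->]. assert (e1 := qf_le _ _ n (bnd_scal c x M h)).
      assert (e2 := aval_scal c x M n h).
      apply (Rmult_le_reg_l (Cmod c)); [lra|]. field_simplify; lra. }
    apply (Rmult_le_compat_l (Cmod c)) in H; auto. field_simplify in H; lra.
Qed.

Lemma qf_cv x M : bnd V x M -> qf x = 0 -> Un_cv (aval V x) 0.
Proof.
  intros h hq eps he.
  assert (hM := bnd_nonneg V x M h).
  assert (Ex : exists m, aval V x m < eps / 2).
  { apply NNPP; intro N. assert (hh : eps / 2 <= qf x).
    { apply glbR_ge; [exists (aval V x 0); exists 0%nat; auto|].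
      intros y [n ->]. apply Rnot_lt_le; intro hl; apply N; eauto. }
    lra. }
  destruct Ex as [m hm].
  destruct (INR_unbounded (INR (S m) * M / (eps / 2))) as [N0 hN0].
  exists N0. intros n hn. unfold Rdist. rewrite Rminus_0_r.
  rewrite Rabs_right; [|apply Rle_ge, (aval_nonneg V x M n h)].
  assert (e := aval_fek V x M m n h).
  assert (hs : INR N0 <= INR (S n)) by (apply le_INR; lia).
  assert (hp := INRS_pos n).
  assert (K : INR (S m) * M / INR (S n) < eps / 2).
  { assert (h1 : INR (S m) * M / (eps / 2) < INR (S n)) by lra.
    apply (Rmult_lt_reg_r (INR (S n))); auto. field_simplify; [|lra].
    apply (Rmult_lt_compat_l (eps / 2)) in h1; [|lra]. field_simplify in h1; lra. }
  lra.
Qed.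

Lemma telesc x j n : bs (seq_add V (shift V x) (seq_scal V m1 x)) j n =
   vadd V (x (n + j)%nat) (vscal V m1 (x j)).
Proof.
  induction n as [|n IH]; simpl.
  - rewrite <- vopp_scal. now rewrite vadd_opp.
  - rewrite IH. unfold seq_add, shift, seq_scal. simpl.
    set (a := x (n + j)%nat). set (b := vscal V m1 (x j)). set (c := x (S (n + j))).
    rewrite <- vopp_scal.
    rewrite (vadd_comm V c (vopp V a)). rewrite vadd_swap. rewrite (vadd_comm V a (vopp V a)).
    rewrite (vadd_comm V (vopp V a) a), vadd_opp, vadd_zero_l. apply vadd_comm.
Qed.

Lemma qf_shift x M : bnd V x M -> qf (seq_add V (shift V x) (seq_scal V m1 x)) <= 0.
Proof.
  intro h. assert (hM := bnd_nonneg V x M h).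
  assert (hb : bnd V (seq_add V (shift V x) (seq_scal V m1 x)) (M + Cmod m1 * M)).
  { apply bnd_add; [intro n; apply h|apply bnd_scal; auto]. }
  apply (arch_le _ _ (2 * M)); [lra|]. intro N.
  eapply Rle_trans; [apply (qf_le _ _ N hb)|].
  apply (proj2 (aval_spec V _ _ N hb)). intros r [j ->]. rewrite telesc.
  assert (t := vnorm_triangle V (x (S N + j)%nat) (vscal V m1 (x j))).
  rewrite vnorm_scal in t. unfold m1 in t. rewrite Cmod_real in t.
  replace (Rabs (-1)) with 1 in t by (rewrite Rabs_left; lra).
  assert (h1 := h (S N + j)%nat). assert (h2 := h j). assert (hp := INRS_pos N).
  assert (hi := Rinv_0_lt_compat _ hp).
  apply (Rmult_le_compat_l (/ INR (S N))) in t; [|lra].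
  assert (h3 : / INR (S N) * (vnorm V (x (S N + j)%nat) + 1 * vnorm V (x j)) <= / INR (S N) * (2 * M)).
  { apply Rmult_le_compat_l; lra. }
  unfold Rdiv. rewrite Rplus_0_l. unfold m1 in *. lra.
Qed.
End SQ3.

Section S4.
Variable V : CNormedSpace.
Notation X := (nat -> V).
Definition rsc (r : R) (x : X) : X := seq_scal V (r, 0) x.
Definition ci : C := (0, 1).

Lemma sb_bnd (x : X) : seq_bounded V x -> exists M, bnd V x M.
Proof. intros [M h]. exists M; exact h. Qed.

Lemma W_add (x y : X) : seq_bounded V x -> seq_bounded V y -> seq_bounded V (seq_add V x y).
Proof. intros [M1 h1] [M2 h2]. exists (M1 + M2). apply bnd_add; auto. Qed.

Lemma W_scal c (x : X) : seq_bounded V x -> seq_bounded V (seq_scal V c x).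
Proof. intros [M h]. exists (Cmod c * M). apply bnd_scal; auto. Qed.

Lemma W_shift (x : X) : seq_bounded V x -> seq_bounded V (shift V x).
Proof. intros [M h]. exists M. intro n. apply h. Qed.

Lemma W_const v : seq_bounded V (const_seq V v).
Proof. exists (vnorm V v). intro n. unfold const_seq. lra. Qed.

Lemma scal_comp c d (x : X) : seq_scal V c (seq_scal V d x) = seq_scal V (Cmult c d) x.
Proof. apply functional_extensionality; intro n. unfold seq_scal. apply vscal_assoc. Qed.

Lemma scal_decomp a b (x : X) :
  seq_scal V (a, b) x = seq_add V (rsc a x) (rsc b (seq_scal V ci x)).
Proof.
  apply functional_extensionality; intro n. unfold seq_add, rsc, seq_scal.
  rewrite vscal_assoc, <- vscal_distr_r. f_equal. apply C_eq; simpl; ring.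
Qed.

Lemma scal_add c (x y : X) : seq_scal V c (seq_add V x y) = seq_add V (seq_scal V c x) (seq_scal V c y).
Proof. apply functional_extensionality; intro n. unfold seq_add, seq_scal. apply vscal_distr_l. Qed.

Theorem HBV (y0 : X) : seq_bounded V y0 -> exists f : (X -> R),
  (forall x y, seq_bounded V x -> seq_bounded V y -> f (seq_add V x y) = f x + f y) /\
  (forall r x, seq_bounded V x -> f (rsc r x) = r * f x) /\
  (forall x, seq_bounded V x -> f x <= qf V x) /\ f y0 = qf V y0.
Proof.
  intro hy0.
  apply (HB_main X (seq_add V) rsc (const_seq V (vzero V)) (seq_bounded V)); auto.
  - intros; apply W_add; auto.
  - intros; apply W_scal; auto.
  - intros; apply functional_extensionality; intro n; apply vadd_assoc.
  - intros; apply functional_extensionality; intro n; apply vadd_comm.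
  - intros; apply functional_extensionality; intro n; apply vadd_zero.
  - intros; apply functional_extensionality; intro n. unfold rsc, seq_scal, const_seq.
    apply vscal0.
  - intros; apply functional_extensionality; intro n. unfold rsc, seq_scal. apply vscal_one.
  - intros; apply scal_add.
  - intros; apply functional_extensionality; intro n. unfold rsc, seq_scal, seq_add.
    rewrite <- vscal_distr_r. f_equal. apply C_eq; simpl; ring.
  - intros; unfold rsc; rewrite scal_comp. f_equal. apply C_eq; simpl; ring.
  - intros x y [M1 h1] [M2 h2]. apply (qf_add V x y M1 M2 h1 h2).
  - intros r x [M h] hr. unfold rsc. eapply Rle_trans; [apply (qf_scal V _ x M h)|].
    rewrite Cmod_real, Rabs_right; lra.
Qed.

Section WithF.
Variable f : X -> R.
Hypothesis f_add : forall x y, seq_bounded V x -> seq_bounded V y -> f (seq_add V x y) = f x + f y.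
Hypothesis f_sc : forall r x, seq_bounded V x -> f (rsc r x) = r * f x.
Hypothesis f_q : forall x, seq_bounded V x -> f x <= qf V x.

Definition Lf (x : X) : C := (f x, - f (seq_scal V ci x)).

Lemma f_shift x : seq_bounded V x -> f (shift V x) = f x.
Proof.
  intros hx. destruct hx as [M h].
  set (d := seq_add V (shift V x) (seq_scal V m1 x)).
  assert (hd : seq_bounded V d) by (apply W_add; [apply W_shift|apply W_scal]; exists M; auto).
  assert (fd : f d = f (shift V x) - f x).
  { unfold d. rewrite f_add; [|apply W_shift; exists M; auto|apply W_scal; exists M; auto].
    change (seq_scal V m1 x) with (rsc (-1) x). rewrite f_sc; [ring|exists M; auto]. }
  assert (h1 : f d <= 0) by (eapply Rle_trans; [apply f_q; auto|apply (qf_shift V x M h)]).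
  assert (h2 : f (rsc (-1) d) <= 0).
  { eapply Rle_trans; [apply f_q; apply W_scal; auto|].
    destruct hd as [Md hMd].
    eapply Rle_trans; [apply (qf_scal V _ d Md hMd)|]. rewrite Cmod_real.
    assert (qd := qf_shift V x M h). fold d in qd.
    assert (0 <= Rabs (-1)) by apply Rabs_pos. nra. }
  rewrite f_sc in h2; auto. lra.
Qed.

Lemma Lf_banach : BanachLimit V Lf.
Proof.
  split; [|split; [|split]].
  - intros x y hx hy. unfold Lf. rewrite scal_add. rewrite !f_add; auto; try solve [apply W_scal; auto].
    apply C_eq; simpl; ring.
  - intros [a b] x hx. unfold Lf. rewrite scal_comp. rewrite scal_decomp.
    set (c := Cmult ci (a, b)). assert (Ec : c = (- b, a)) by (apply C_eq; unfold c; simpl; ring).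
    rewrite Ec. rewrite scal_decomp. rewrite !f_add; try solve [unfold rsc; repeat apply W_scal; auto].
    rewrite !f_sc; try solve [unfold rsc; repeat apply W_scal; auto]. apply C_eq; simpl; ring.
  - intros x M hx hM. unfold Lf.
    set (u := f x). set (w := - f (seq_scal V ci x)).
    assert (hM0 : 0 <= M) by (eapply Rle_trans; [apply vnorm_nonneg|apply (hM 0%nat)]).
    assert (qM : qf V x <= M).
    { eapply Rle_trans; [apply (qf_le V x M 0%nat hM)|]. apply (aval_le V x M 0 hM). }
    set (m := Cmod (u, w)).
    assert (m0 : 0 <= m) by apply sqrt_pos.
    assert (mm : m * m = u * u + w * w).
    { unfold m, Cmod. simpl fst; simpl snd. rewrite sqrt_sqrt; [ring|nra]. }
    destruct (Req_dec m 0) as [E|E]; [fold m; lra|].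
    set (c := (u / m, - w / m)).
    assert (Lc : Lf (seq_scal V c x) = Cmult c (u, w)).
    {
      unfold Lf. rewrite scal_comp. unfold c. rewrite scal_decomp.
      set (c' := Cmult ci (u / m, - w / m)).
      assert (Ec : c' = (w / m, u / m)) by (apply C_eq; unfold c'; simpl; field; auto).
      rewrite Ec. rewrite scal_decomp. rewrite !f_add; try solve [unfold rsc; repeat apply W_scal; auto].
      rewrite !f_sc; try solve [unfold rsc; repeat apply W_scal; auto]. apply C_eq; simpl; unfold w, u; field; auto. }
    assert (fc : f (seq_scal V c x) = m).
    { assert (h := f_equal fst Lc). unfold Lf in h; simpl in h. rewrite h.
      unfold c; simpl.
      replace (u / m * u - - w / m * w) with ((u * u + w * w) / m) by (field; auto).
      rewrite <- mm. field; auto. }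
    assert (Cc : Cmod c = 1).
    { unfold Cmod, c; simpl. replace (u / m * (u / m * 1) + - w / m * (- w / m * 1)) with 1.
      apply sqrt_1. replace (u / m * (u / m * 1) + - w / m * (- w / m * 1)) with ((u * u + w * w) / (m * m)) by (field; auto).
      rewrite <- mm. field; auto. }
    assert (h := f_q _ (W_scal c x hx)). rewrite fc in h.
    assert (h2 := qf_scal V c x M hM). rewrite Cc in h2. fold m. lra.
  - intros x hx. unfold Lf. rewrite f_shift; auto.
    change (seq_scal V ci (shift V x)) with (shift V (seq_scal V ci x)).
    rewrite f_shift; auto. apply W_scal; auto.
Qed.
End WithF.
End S4.

Section S5.
Variable V : CNormedSpace.
Notation X := (nat -> V).
Notation bs := (block_sum V).

Lemma sub_eq (x w : X) : seq_sub V x w = seq_add V x (seq_scal V m1 w).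
Proof. apply functional_extensionality; intro n. unfold seq_sub, seq_add, seq_scal. now rewrite vopp_scal. Qed.

Lemma shift_k (L : X -> C) (z : X) : BanachLimit V L -> seq_bounded V z ->
  forall k, L (fun j => z (k + j)%nat) = L z.
Proof.
  intros [_ [_ [_ Ls]]] [M hz] k. induction k as [|k IH].
  - reflexivity.
  - rewrite <- IH. rewrite <- (Ls (fun j => z (k + j)%nat)).
    + f_equal. apply functional_extensionality; intro n. unfold shift. cbv beta. f_equal. lia.
    + exists M. intro n. apply hz.
Qed.

Lemma L_bs (L : X -> C) (z : X) : BanachLimit V L -> seq_bounded V z ->
  forall k, L (fun j => bs z j k) = (INR k * fst (L z), INR k * snd (L z)).
Proof.
  intros HL hz k. destruct HL as [La [Lsc [Lb Ls]]]. destruct hz as [M hM].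
  induction k as [|k IH].
  - simpl. replace (fun _ : nat => vzero V) with (seq_scal V C0 z).
    + rewrite Lsc; [|exists M; auto]. apply C_eq; simpl; ring.
    + apply functional_extensionality; intro n. apply vscal0.
  - change (fun j => bs z j (S k)) with (seq_add V (fun j => bs z j k) (fun j => z (k + j)%nat)).
    rewrite La.
    + rewrite IH. rewrite (shift_k L z (conj La (conj Lsc (conj Lb Ls))) (ex_intro _ M hM)).
      unfold Cplus; apply C_eq; cbn [fst snd]; rewrite S_INR; ring.
    + exists (INR k * M). intro j. apply bs_norm; auto.
    + exists M. intro j. apply hM.
Qed.

Lemma L_zero (L : X -> C) (y : X) (a : nat -> R) : BanachLimit V L -> seq_bounded V y ->
  (forall n, avg_sup V y n (a n)) -> Un_cv a 0 -> L y = C0.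
Proof.
  intros HL hy ha hc.
  assert (HB := HL). destruct HL as [La [Lsc [Lb Ls]]].
  destruct hy as [M hM].
  assert (bnd : forall n, Cmod (L y) <= a n).
  { intro n.
    set (avg := seq_scal V (/ INR (S n), 0) (fun j => bs y j (S n))).
    assert (hb : seq_bounded V (fun j => bs y j (S n))) by (exists (INR (S n) * M); intro j; apply bs_norm; auto).
    assert (E : L avg = L y).
    { unfold avg. rewrite Lsc; auto. rewrite (L_bs L y HB (ex_intro _ M hM)).
      assert (hp := INRS_pos n). destruct (L y) as [u w]. unfold Cmult; apply C_eq; cbn [fst snd]; field; lra. }
    rewrite <- E. apply Lb.
    - unfold avg. apply W_scal; auto.
    - intro j. unfold avg, seq_scal. rewrite vnorm_scal, Cmod_real.
      rewrite Rabs_right; [|left; apply Rinv_0_lt_compat, INRS_pos].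
      apply (proj1 (ha n)). exists j; reflexivity. }
  destruct (Req_dec (Cmod (L y)) 0) as [E|E].
  - destruct (L y) as [u w]. unfold Cmod in E; simpl in E.
    apply sqrt_eq_0 in E; [|nra]. apply C_eq; unfold C0; simpl; nra.
  - exfalso. assert (hp : 0 < Cmod (L y)) by (assert (0 <= Cmod (L y)) by apply sqrt_pos; lra).
    destruct (hc _ hp) as [N hN]. specialize (hN N (Nat.le_refl N)). specialize (bnd N).
    unfold Rdist in hN. rewrite Rminus_0_r in hN. assert (h := Rle_abs (a N)). lra.
Qed.

End S5.

Theorem mainTheorem11 (V : CNormedSpace) (x : nat -> V) (v : V) :
  @seq_bounded V x ->
  (@strongly_almost_convergent V x v <-> @p_is V (@seq_sub V x (@const_seq V v)) 0).
Proof.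
  intro hx. set (y := seq_sub V x (const_seq V v)).
  assert (hy : seq_bounded V y).
  { unfold y. rewrite sub_eq. apply W_add; auto. apply W_scal, W_const. }
  split.
  - intro SAC. destruct hy as [M hM].
    assert (Q0 : qf V y = 0).
    { assert (q0 := qf_nonneg V y M hM). apply NNPP; intro hne.
      destruct (HBV V y (ex_intro _ M hM)) as [f [fa [fs [fq fy]]]].
      assert (HL := Lf_banach V f fa fs fq).
      assert (E := SAC _ HL).
      destruct HL as [La [Lsc _]].
      assert (E2 : Lf V f y = Cplus (Lf V f x) (Cmult m1 (Lf V f (const_seq V v)))).
      { unfold y. rewrite sub_eq. rewrite La; auto; [|apply W_scal, W_const].
        rewrite Lsc; auto. apply W_const. }
      rewrite E in E2. apply (f_equal fst) in E2. unfold Lf at 1 in E2. simpl in E2.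
      rewrite fy in E2. destruct (Lf V f (const_seq V v)) as [p r]. simpl in E2. lra. }
    exists (aval V y). split.
    + intro n. exact (aval_spec V y M n hM).
    + exact (qf_cv V y M hM Q0).
  - intros [a [ha hc]] L HL.
    assert (Ly := L_zero V L y a HL hy ha hc).
    assert (Ex : x = seq_add V y (const_seq V v)).
    { apply functional_extensionality; intro n. unfold y, seq_add, seq_sub, const_seq.
      rewrite <- vadd_assoc. rewrite (vadd_comm V (vopp V v) v), vadd_opp, vadd_zero. reflexivity. }
    rewrite Ex. destruct HL as [La _]. rewrite La; auto; [|apply W_const].
    rewrite Ly. destruct (L (const_seq V v)) as [p r]. apply C_eq; unfold C0; simpl; ring.
Qed.
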